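(* Let $P(z_1,\dots,z_n)=\sum_{S\subseteq[n]}p_S\prod_{i\in S}z_i$ with $p_S\in\mathbb R\setminus\{0\}$ and $p_S=p_{[n]\setminus S}$ for all $S\subseteq[n]$. For each $j$ write $P=A_jz_j+B_j$ with $A_j,B_j$ multilinear in the variables $z_i$, $i\ne j$, and assume that for every $j$, $A_j\ne0$ whenever $|z_i|\ge1$ for all $i\neq j$. Then $P$ has the Lee-Yang property.
   Context: A multilinear polynomial $P(z_1,\dots,z_n)$ has the Lee-Yang property if $P(\lambda_1,\dots,\lambda_n)\neq0$ whenever $|\lambda_i|\ge1$ for all $i$ and $|\lambda_i|>1$ for at least one $i$. *)

(* Defs.v *)
(* Complex numbers: an arbitrary numClosedFieldType C
   (e.g. the complex numbers); real coefficients = elements of Num.real. *)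
From HB Require Import structures.
From mathcomp Require Import all_boot all_order all_algebra.
Set Implicit Arguments. Unset Strict Implicit. Unset Printing Implicit Defensive.
Import Order.TTheory GRing.Theory Num.Theory.
Local Open Scope ring_scope.

Definition mpoly_eval (C : numClosedFieldType) (n : nat)
  (p : {set 'I_n} -> C) (z : 'I_n -> C) : C :=
  \sum_(S : {set 'I_n}) p S * \prod_(i in S) z i.

(* The coefficient A_j of z_j in P = A_j z_j + B_j, evaluated at z
   (it does not depend on z j). *)
Definition mpoly_coef_A (C : numClosedFieldType) (n : nat)
  (p : {set 'I_n} -> C) (j : 'I_n) (z : 'I_n -> C) : C :=
  \sum_(S : {set 'I_n} | j \in S) p S * \prod_(i in S :\ j) z i.

Definition LeeYang (C : numClosedFieldType) (n : nat) (P : ('I_n -> C) -> C) : Prop :=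
  forall z : 'I_n -> C,
    (forall i, 1 <= `|z i|) -> (exists i, 1 < `|z i|) -> P z != 0.

(* Main.v *)
Require Import Defs.
From HB Require Import structures.
From mathcomp Require Import all_boot all_order all_algebra.
From mathcomp Require Import ring.
Import Order.TTheory GRing.Theory Num.Theory.
Local Open Scope ring_scope.

Section Mob.
Variable C : numClosedFieldType.

Lemma re_lb (y : C) : - (2 * `|y|) <= y + y^*.
Proof.
have hR : 'Re y \is Num.real := Creal_Re y.
have h1 : `|'Re y| <= `|y| := (leif_normC_Re_Creal y).1.
have h2 : - 'Re y <= `|'Re y| by rewrite -normrN real_ler_norm ?rpredN.
have -> : y + y^* = 2 * 'Re y by rewrite ReE mulrC mulfVK // pnatr_eq0.
rewrite -mulrN ler_pM2l ?ltr0n // lerNl; exact: le_trans h2 h1.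
Qed.

Lemma quad_lemma (A0 k B0 rho r : C) : 0 < A0 -> 0 <= rho -> rho < 1 -> 1 <= r ->
  A0 * rho ^+ 2 - 2 * k * rho + B0 <= 0 -> 0 <= A0 - 2 * k + B0 ->
  0 <= A0 * r ^+ 2 - 2 * k * r + B0.
Proof.
move=> A0p rho0 rho1 r1 hq0 hq1.
have e1 : (A0 - 2 * k + B0) - (A0 * rho ^+ 2 - 2 * k * rho + B0)
  = (1 - rho) * (A0 * (1 + rho) - 2 * k) by ring.
have h1 : 0 <= A0 * (1 + rho) - 2 * k.
  rewrite -(pmulr_rge0 _ (x := 1 - rho)) ?subr_gt0 // -e1.
  by rewrite subr_ge0 (le_trans hq0).
have e2 : (A0 * r ^+ 2 - 2 * k * r + B0) - (A0 - 2 * k + B0)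
  = (r - 1) * ((A0 * (1 + rho) - 2 * k) + A0 * (r - rho)) by ring.
have h2 : 0 <= (A0 * r ^+ 2 - 2 * k * r + B0) - (A0 - 2 * k + B0).
  rewrite e2; apply: mulr_ge0; first by rewrite subr_ge0.
  apply: addr_ge0 => //; apply: mulr_ge0; first exact: ltW.
  rewrite subr_ge0; exact: le_trans (ltW rho1) r1.
by move: h2; rewrite subr_ge0; apply: le_trans.
Qed.

Lemma cjD (x y : C) : (x + y)^* = x^* + y^*. Proof. exact: rmorphD. Qed.
Lemma cjB (x y : C) : (x - y)^* = x^* - y^*. Proof. exact: rmorphB. Qed.
Lemma cjN (x : C) : (- x)^* = - x^*. Proof. exact: rmorphN. Qed.
Lemma cjM (x y : C) : (x * y)^* = x^* * y^*. Proof. exact: rmorphM. Qed.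

Lemma D_expand (a b c d x : C) :
  `|a * x + b| ^+ 2 - `|c * x + d| ^+ 2 =
  (`|a| ^+ 2 - `|c| ^+ 2) * `|x| ^+ 2
  + ((a * b^* - c * d^*) * x + ((a * b^* - c * d^*) * x)^*)
  + (`|b| ^+ 2 - `|d| ^+ 2).
Proof.
rewrite !normCK !(cjD, cjN, cjM, conjCK). ring.
Qed.


Lemma mobius (a b c d : C) : a != 0 -> `|b| < `|a| -> `|c| < `|a| ->
  (forall u, `|u| = 1 -> `|c * u + d| <= `|a * u + b|) ->
  forall w, 1 <= `|w| -> `|c * w + d| <= `|a * w + b|.
Proof.
move=> a0 hb hc hu w hw.
set A0 := `|a| ^+ 2 - `|c| ^+ 2.
set B0 := `|b| ^+ 2 - `|d| ^+ 2.
set K := a * b^* - c * d^*.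
have lb x : A0 * `|x| ^+ 2 - 2 * `|K| * `|x| + B0 <= `|a * x + b| ^+ 2 - `|c * x + d| ^+ 2.
  rewrite D_expand -/A0 -/B0 -/K lerD2r lerD2l.
  by rewrite -mulrA -normrM re_lb.
have A0p : 0 < A0.
  by rewrite subr_gt0 ltr_sqr ?nnegrE.
have sq y : 0 <= `|a * y + b| ^+ 2 - `|c * y + d| ^+ 2 ->
  `|c * y + d| <= `|a * y + b|.
  by rewrite subr_ge0 ler_sqr ?nnegrE.
apply: (sq w).
set w0 := - b / a.
have aw0 : a * w0 + b = 0 by rewrite /w0 mulrC divfK // addNr.
have rho1 : `|w0| < 1 by rewrite /w0 normf_div normrN ltr_pdivrMr ?normr_gt0 // mul1r.
have hq0 : A0 * `|w0| ^+ 2 - 2 * `|K| * `|w0| + B0 <= 0.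
  apply: le_trans (lb w0) _; rewrite aw0 normr0 expr0n /= sub0r oppr_le0.
  by rewrite exprn_ge0.
have hq1 : 0 <= A0 - 2 * `|K| + B0.
  have [u [u1 hKu]] : exists u, `|u| = 1 /\ K * u + (K * u)^* = - (2 * `|K|).
    have [->|K0] := eqVneq K 0.
      by exists 1; rewrite normr1 normr0 !mul0r conjC0 addr0 mulr0 oppr0.
    have nK : 0 < `|K| by rewrite normr_gt0.
    exists (- K^* / `|K|); split.
      by rewrite normf_div normrN norm_conjC normr_id divff // gt_eqF.
    have -> : K * (- K^* / `|K|) = - `|K|.
      by rewrite mulrA mulrN -normCK mulNr expr2 mulfK ?gt_eqF.
    by rewrite conj_Creal ?realN ?normr_real // mulr2n mulrDl !mul1r opprD.
  have : 0 <= `|a * u + b| ^+ 2 - `|c * u + d| ^+ 2.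
    by rewrite subr_ge0 ler_sqr ?nnegrE // hu.
  by rewrite D_expand u1 expr1n mulr1 hKu.
apply: le_trans (lb w).
exact: (@quad_lemma _ _ _ _ _ A0p (normr_ge0 w0) rho1 hw hq0 hq1).
Qed.

End Mob.

Section Pol.
Variable C : numClosedFieldType.

Definition Mb (p : {poly C}) := \sum_(i < size p) `|p`_i|.

Lemma Mb_ge0 p : 0 <= Mb p.
Proof. by apply: sumr_ge0 => i _. Qed.

Lemma pow_diff (t : C) i : 0 <= t -> t <= 1 -> `|t ^+ i - 0 ^+ i| <= t.
Proof.
move=> t0 t1; case: i => [|i]; first by rewrite !expr0 subrr normr0.
rewrite expr0n /= subr0 ger0_norm ?exprn_ge0 // exprS.
by rewrite -[leRHS]mulr1 ler_wpM2l // exprn_ile1.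
Qed.

Lemma horner_bound (p : {poly C}) (t : C) : 0 <= t -> t <= 1 ->
  `|p.[t] - p.[0]| <= t * Mb p.
Proof.
move=> t0 t1; rewrite !horner_coef -sumrB.
apply: le_trans (ler_norm_sum _ _ _) _.
rewrite /Mb mulr_sumr; apply: ler_sum => i _.
rewrite -mulrBr normrM mulrC; apply: ler_wpM2r => //.
exact: pow_diff.
Qed.

Lemma poly_small (a b : {poly C}) : a != 0 -> a.[1] = 0 -> b.[1] != 0 ->
  exists s : C, [/\ 1 <= s, a.[s] != 0 & `|a.[s]| <= `|b.[s]|].
Proof.
move=> a0 a1 b1.
set A := a \Po ('X + 1); set B := b \Po ('X + 1).
have hev (q : {poly C}) t : (q \Po ('X + 1)).[t] = q.[t + 1] by rewrite horner_comp !hornerE.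
have A0 : A != 0 by rewrite comp_poly2_eq0 ?size_XaddC.
have A00 : A.[0] = 0 by rewrite hev add0r.
have B00 : B.[0] = b.[1] by rewrite hev add0r.
set MA := Mb A; set MB := Mb B; set b0 := `|b.[1]|.
have b0p : 0 < b0 by rewrite normr_gt0.
have den : 0 < MA + MB + b0 by rewrite ltr_wpDl ?addr_ge0 ?Mb_ge0.
set c := b0 / (MA + MB + b0).
have c0 : 0 < c by rewrite divr_gt0.
have c1 : c <= 1 by rewrite ler_pdivrMr // mul1r lerDr addr_ge0 ?Mb_ge0.
have cM : c * (MA + MB) <= b0.
  rewrite /c mulrAC ler_pdivrMr // ler_wpM2l ?ltW //.
  by rewrite ltrDl.
set rs := [seq c / (i.+1)%:R | i <- iota 0 (size A)].
have : ~~ all (root A) rs.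
  have urs : uniq rs.
    rewrite map_inj_uniq ?iota_uniq // => i j /= h.
    have : (i.+1)%:R^-1 = (j.+1)%:R^-1 :> C by apply: (mulfI (negbT (gt_eqF c0))); exact: h.
    by move/invr_inj/eqP; rewrite eqr_nat => /eqP [].
  apply/negP => hall; have := max_poly_roots A0 hall urs.
  by rewrite size_map size_iota ltnn.
case/allPn => t /mapP [i _ ->] {t} hroot.
set t := c / (i.+1)%:R in hroot *.
have t0 : 0 < t by rewrite divr_gt0 // ltr0n.
have tc : t <= c.
  by rewrite ler_pdivrMr ?ltr0n // ler_peMr ?(ltW c0) // ler1n.
have t1 : t <= 1 := le_trans tc c1.
exists (t + 1); split.
- by rewrite lerDr ltW.
- by rewrite -hev.
rewrite -!hev.
have hA := horner_bound A t (ltW t0) t1; rewrite A00 subr0 in hA.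
have hB := horner_bound B t (ltW t0) t1; rewrite B00 in hB.
have hB2 : b0 <= `|B.[t]| + t * MB.
  apply: le_trans (lerD (lexx _) hB).
  have e : b.[1] = B.[t] - (B.[t] - b.[1]) by rewrite opprB addrC subrK.
  by rewrite /b0 {1}e ler_normB.
apply: le_trans hA _.
rewrite -(lerD2r (t * MB)) -mulrDr; apply: le_trans hB2.
apply: le_trans cM; apply: ler_wpM2r => //.
by rewrite addr_ge0 ?Mb_ge0.
Qed.

End Pol.

Section Aux.
Variables (C : numClosedFieldType) (n : nat).
Implicit Types (q : {set 'I_n} -> C) (z : 'I_n -> C).

Definition F q z := \sum_(S : {set 'I_n}) q S * \prod_(i in S) z i.
Definition upd z (k : 'I_n) (w : C) := fun i => if i == k then w else z i.
Definition cut q (k : 'I_n) (b : bool) := fun S : {set 'I_n} => if (k \in S) == b then q S else 0.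

Lemma F_ext q q' z z' : (forall S, q S = q' S) -> (forall i, z i = z' i) -> F q z = F q' z'.
Proof.
move=> hq hz; apply: eq_bigr => S _; rewrite hq; congr (_ * _).
by apply: eq_bigr => i _.
Qed.

Lemma prod_upd_in z k w (S : {set 'I_n}) : k \in S ->
  \prod_(i in S) upd z k w i = w * \prod_(i in S | i != k) z i.
Proof.
move=> kS; rewrite (bigD1 k) //= /upd eqxx; congr (_ * _).
by apply: eq_bigr => i /andP[_ /negbTE ->].
Qed.

Lemma prod_upd_out z k w (S : {set 'I_n}) : k \notin S ->
  \prod_(i in S) upd z k w i = \prod_(i in S) z i.
Proof.
move=> kS; apply: eq_bigr => i iS; rewrite /upd; case: eqP => // eik.
by rewrite -eik iS in kS.
Qed.

Lemma F_decomp q z k w :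
  F q (upd z k w) = w * F (cut q k true) (upd z k 1) + F (cut q k false) z.
Proof.
rewrite /F mulr_sumr -big_split /=; apply: eq_bigr => S _.
rewrite /cut; case: (boolP (k \in S)) => kS /=.
  by rewrite !prod_upd_in // mul1r mul0r addr0 mulrCA.
by rewrite !prod_upd_out // mul0r mulr0 add0r.
Qed.

Lemma F0 q z : (forall S, q S = 0) -> F q z = 0.
Proof. by move=> h; apply: big1 => S _; rewrite h mul0r. Qed.

Lemma F_set_in q z (k : 'I_n) (c : C) : (forall S : {set 'I_n}, k \notin S -> q S = 0) ->
  F q (upd z k c) = c * F q (upd z k 1).
Proof.
move=> h; rewrite F_decomp (F0 (cut q k false)); last first.
  by move=> S; rewrite /cut; case: (boolP (k \in S)) => // /h.
rewrite addr0; congr (_ * _); apply: F_ext => // S; rewrite /cut.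
by case: (boolP (k \in S)) => // /h ->.
Qed.

Lemma F_set_out q z (k : 'I_n) (c : C) : (forall S : {set 'I_n}, k \in S -> q S = 0) ->
  F q (upd z k c) = F q z.
Proof.
move=> h; rewrite F_decomp (F0 (cut q k true)); last first.
  by move=> S; rewrite /cut; case: (boolP (k \in S)) => // /h.
rewrite mulr0 add0r; apply: F_ext => // S; rewrite /cut.
by case: (boolP (k \in S)) => // /h ->.
Qed.


Variable p : {set 'I_n} -> C.
Hypothesis p_real : forall S, p S \is Num.real.
Hypothesis p_sym : forall S, p S = p (~: S).

Definition Aj j z := F (cut p j true) (upd z j 1).
Definition Bj j z := F (cut p j false) z.

Lemma coefA_eq j z : mpoly_coef_A p j z = Aj j z.
Proof.
rewrite /mpoly_coef_A /Aj /F big_mkcond /=; apply: eq_bigr => S _.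
rewrite /cut; case: (boolP (j \in S)) => jS /=; last by rewrite mul0r.
rewrite prod_upd_in // mul1r; congr (_ * _); apply: eq_bigl => i.
by rewrite in_setD1 andbC.
Qed.

Lemma eval_decomp j z : mpoly_eval p z = z j * Aj j z + Bj j z.
Proof.
rewrite -F_decomp; apply: F_ext => // i; rewrite /upd; by case: eqP => [->|].
Qed.

Lemma conj_unit (y : C) : `|y| = 1 -> y^* = y^-1.
Proof.
move=> hy; have y0 : y != 0 by rewrite -normr_eq0 hy oner_eq0.
by rewrite invC_norm hy expr1n invr1 mul1r.
Qed.

Lemma conj_F q y : (F q y)^* = F (fun S => (q S)^*) (fun i => (y i)^*).
Proof. rewrite /F rmorph_sum; apply: eq_bigr => S _; by rewrite rmorphM rmorph_prod. Qed.

Lemma base_case j z : (forall i, i != j -> `|z i| = 1) -> `|Bj j z| = `|Aj j z|.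
Proof.
move=> hz; set y := upd z j 1.
have hy : forall i, `|y i| = 1.
  by move=> i; rewrite /y /upd; case: eqP => [_|/eqP h]; [rewrite normr1|exact: hz].
have y0 : forall i, y i != 0 by move=> i; rewrite -normr_eq0 hy oner_eq0.
set pi := \prod_i y i.
suff -> : Bj j z = pi * (Aj j z)^*.
  by rewrite normrM norm_conjC normr_prod big1 ?mul1r // => i _; rewrite hy.
rewrite /Aj -/y conj_F /F mulr_sumr.
rewrite (reindex_inj (@setC_inj _)) /=; rewrite /Bj /F; apply: eq_bigr => S _.
have -> : (cut p j true (~: S))^* = cut p j true (~: S).
  rewrite /cut; case: ifP => _; last by rewrite conjC0.
  exact: conj_Creal.
rewrite /cut in_setC; case: (boolP (j \in S)) => jS /=; first by rewrite !mul0r mulr0.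
rewrite -p_sym mulrCA; congr (_ * _).
rewrite /pi (bigID (mem S) predT) /=.
rewrite -mulrA [X in _ * X](_ : _ = 1) ?mulr1; last first.
  rewrite (eq_bigl (mem (~: S))); last by move=> i; rewrite /= in_setC. rewrite -big_split /=; apply: big1 => i _.
  by rewrite conj_unit // mulfV.
by rewrite -(prod_upd_out z j 1 S jS).
Qed.

Hypothesis p_nz : forall S, p S != 0.
Hypothesis hA : forall j z, (forall i, i != j -> 1 <= `|z i|) -> Aj j z != 0.

Definition Pol q z := \sum_(S : {set 'I_n}) (q S * \prod_(i in S) z i) *: 'X^#|S|.

Lemma hornerPol q z s : (Pol q z).[s] = F q (fun i => s * z i).
Proof.
rewrite /Pol horner_sum; apply: eq_bigr => S _.
by rewrite hornerZ hornerXn big_split /= prodr_const [s ^+ _ * _]mulrC mulrA.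
Qed.

Lemma Aj_decomp j k x w : j != k ->
  Aj j (upd x k w) = w * F (cut (cut p j true) k true) (upd (upd x j 1) k 1)
                     + F (cut (cut p j true) k false) (upd x j 1).
Proof.
move=> jk; rewrite /Aj -F_decomp; apply: F_ext => // i; rewrite /upd.
case: (eqVneq i j) => [->|ij]; first by rewrite (negbTE jk).
by [].
Qed.

Lemma alpha_nz j k z : j != k -> (forall i, i != j -> 1 <= `|z i|) ->
  F (cut (cut p j true) k true) (upd (upd z j 1) k 1) != 0.
Proof.
move=> jk hz; apply/negP => /eqP h0.
set qa := cut (cut p j true) k true; set qb := cut (cut p j true) k false.
have qa_j (S : {set 'I_n}) : j \notin S -> qa S = 0.
  by move=> jS; rewrite /qa /cut; case: ifP => // _; rewrite (negbTE jS).
have qa_k (S : {set 'I_n}) : k \notin S -> qa S = 0.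
  by move=> kS; rewrite /qa /cut (negbTE kS).
have qb_j (S : {set 'I_n}) : j \notin S -> qb S = 0.
  by move=> jS; rewrite /qb /cut; case: ifP => // _; rewrite (negbTE jS).
have qb_k (S : {set 'I_n}) : k \in S -> qb S = 0.
  by move=> kS; rewrite /qb /cut kS.
set y := upd (upd z j 1) k 1.
have yj : y j = 1 by rewrite /y /upd (negbTE jk) eqxx.
have yk : y k = 1 by rewrite /y /upd eqxx.
have y0 i : y i != 0.
  rewrite /y /upd; case: (i == k); first exact: oner_neq0.
  case: (eqVneq i j) => [_|ij]; first exact: oner_neq0.
  by rewrite -normr_eq0; apply: lt0r_neq0; apply: lt_le_trans (hz _ ij); apply: ltr01.
have hbeta x : F qb (upd x j 1) = F qb (upd (upd x j 1) k 1).
  by rewrite [RHS]F_set_out //; apply: qb_k.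
set aP := Pol qa y; set bP := Pol qb y.
have aP1 : aP.[1] = 0.
  rewrite hornerPol -h0; apply: F_ext => // i; by rewrite mul1r.
have bP1 : bP.[1] != 0.
  have := hA _ _ hz.
  have -> : Aj j z = Aj j (upd z k (z k)).
    apply: F_ext => // i; rewrite /upd; case: (i == j) => //.
    by case: eqP => // ->.
  rewrite Aj_decomp // h0 mulr0 add0r hbeta.
  rewrite hornerPol; congr (_ != 0); apply: F_ext => // i; by rewrite mul1r /upd.
have aPn : aP != 0.
  apply/negP => /eqP aP0.
  have : aP`_n = qa setT * \prod_(i in setT) y i.
    rewrite /aP /Pol coef_sum (bigD1 setT) //= coefZ coefXn cardsT card_ord eqxx.
    rewrite -[true%:R]/(1 : C) mulr1.
    rewrite [X in _ + X]big1 ?addr0 // => S SnT; rewrite coefZ coefXn.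
    case: eqP => [hS|]; last by rewrite mulr0.
    exfalso; move: SnT; rewrite eqEcard subsetT cardsT card_ord -hS leqnn.
    by [].
  rewrite aP0 coef0 => /esym/eqP; rewrite mulf_eq0 => /orP[].
    by rewrite /qa /cut !in_setT /= (negbTE (p_nz _)).
  by apply/negP; apply/prodf_neq0 => i _.
have [s [s1 aPs hs]] := @poly_small _ _ _ aPn aP1 bP1.
have s0 : 0 < s := lt_le_trans ltr01 s1.
set x := fun i => s * y i.
set al := F qa (upd (upd x j 1) k 1); set be := F qb (upd x j 1).
have eA : aP.[s] = s * s * al.
  rewrite hornerPol -/x.
  have -> : F qa x = F qa (upd x j s).
    by apply: F_ext => // i; rewrite /upd; case: eqP => [->|]; rewrite // /x yj mulr1.
  rewrite F_set_in // -mulrA; congr (_ * _).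
  rewrite [LHS](_ : _ = F qa (upd (upd x j 1) k s)); first by rewrite F_set_in.
  apply: F_ext => // i; rewrite /upd; case: (eqVneq i k) => [->|//].
  by rewrite eq_sym (negbTE jk) /x yk mulr1.
have eB : bP.[s] = s * be.
  rewrite hornerPol -/x.
  have -> : F qb x = F qb (upd x j s).
    by apply: F_ext => // i; rewrite /upd; case: eqP => [->|]; rewrite // /x yj mulr1.
  by rewrite F_set_in.
have al0 : al != 0 by move: aPs; rewrite eA !mulf_eq0 negb_or => /andP[].
have hab : `|al| <= `|be|.
  move: hs; rewrite eA eB !normrM (ger0_norm (ltW s0)) -mulrA ler_pM2l //.
  apply: le_trans; rewrite ler_peMl //.
set w := - be / al.
have hw : 1 <= `|w|.
  by rewrite /w normf_div normrN ler_pdivlMr ?normr_gt0 // mul1r.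
have hreg : forall i, i != j -> 1 <= `|upd x k w i|.
  move=> i ij; rewrite /upd; case: eqP => // /eqP ik.
  rewrite /x normrM (ger0_norm (ltW s0)) /y /upd (negbTE ik) (negbTE ij).
  by apply: mulr_ege1 => //; apply: hz.
have := hA _ _ hreg.
by rewrite Aj_decomp // -/al -/be /w divfK // addNr eqxx.
Qed.

Definition cnt j z := #|[set i | (i != j) && (`|z i| != 1)]|.

Lemma not_lt_abs (x y : C) : ~~ (`|x| < `|y|) -> `|y| <= `|x|.
Proof. by rewrite real_ltNge ?normr_real // negbK. Qed.

Lemma main_ind m : forall j z, (forall i, i != j -> 1 <= `|z i|) ->
  (cnt j z <= m)%N -> `|Bj j z| <= `|Aj j z|.
Proof.
elim: m => [|m IH] j z hz hc.
  rewrite base_case // => i ij; case: (eqVneq `|z i| 1) => // hi.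
  have : i \in [set i | (i != j) && (`|z i| != 1)] by rewrite inE ij hi.
  have h0 : cnt j z = 0%N by apply/eqP; rewrite -leqn0.
  by rewrite (cards0_eq h0) inE. 
case: (leqP (cnt j z) m) => [|hm]; first exact: IH.
have : (0 < cnt j z)%N by apply: leq_ltn_trans hm.
rewrite card_gt0 => /set0Pn [k]; rewrite inE => /andP [kj zk1].
have jk : j != k by rewrite eq_sym.
set al := F (cut (cut p j true) k true) (upd (upd z j 1) k 1).
set be := F (cut (cut p j true) k false) (upd z j 1).
set ga := F (cut (cut p j false) k true) (upd z k 1).
set de := F (cut (cut p j false) k false) z.
have hAw w : Aj j (upd z k w) = al * w + be by rewrite Aj_decomp // mulrC.
have hBw w : Bj j (upd z k w) = ga * w + de by rewrite /Bj F_decomp mulrC.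
have hAk v : Aj k (upd z j v) = al * v + ga.
  rewrite Aj_decomp // mulrC; congr (_ * _ + _); apply: F_ext.
  - by move=> S; rewrite /cut; case: (j \in S); case: (k \in S).
  - by move=> i; rewrite /upd; case: (i == j); case: (i == k).
  - by move=> S; rewrite /cut; case: (j \in S); case: (k \in S).
  - by [].
have al0 : al != 0 by apply: alpha_nz.
have hzk : 1 <= `|z k| by apply: hz.
have hbe : `|be| < `|al|.
  rewrite real_ltNge ?normr_real //; apply/negP => hle.
  set w := - be / al.
  have hw : 1 <= `|w| by rewrite /w normf_div normrN ler_pdivlMr ?normr_gt0 // mul1r.
  have hreg : forall i, i != j -> 1 <= `|upd z k w i|.
    by move=> i ij; rewrite /upd; case: eqP => // _; apply: hz.
  have := hA _ _ hreg.
  by rewrite hAw /w mulrC divfK // addNr eqxx.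
have hga : `|ga| < `|al|.
  rewrite real_ltNge ?normr_real //; apply/negP => hle.
  set v := - ga / al.
  have hv : 1 <= `|v| by rewrite /v normf_div normrN ler_pdivlMr ?normr_gt0 // mul1r.
  have hreg : forall i, i != k -> 1 <= `|upd z j v i|.
    by move=> i ik; rewrite /upd; case: eqP => // /eqP ij; apply: hz.
  have := hA _ _ hreg.
  by rewrite hAk /v mulrC divfK // addNr eqxx.
have circ : forall u, `|u| = 1 -> `|ga * u + de| <= `|al * u + be|.
  move=> u u1; rewrite -hAw -hBw; apply: IH.
    by move=> i ij; rewrite /upd; case: eqP => [_|_]; [rewrite u1 | apply: hz].
  rewrite -ltnS; apply: leq_trans hc; rewrite /cnt.
  rewrite [X in (_ < X)%N](cardsD1 k) inE kj zk1 /= add1n ltnS.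
  apply: subset_leq_card; apply/subsetP => i; rewrite !inE /upd.
  case: (eqVneq i k) => [->|ik]; first by rewrite u1 eqxx andbF.
  by [].
have := @mobius _ _ _ _ _ al0 hbe hga circ _ hzk.
have eA : Aj j z = Aj j (upd z k (z k)).
  by apply: F_ext => // i; rewrite /upd; case: (i == j) => //; case: eqP => // ->.
have eB : Bj j z = Bj j (upd z k (z k)).
  by apply: F_ext => // i; rewrite /upd; case: eqP => // ->.
by rewrite eA eB hAw hBw.
Qed.

End Aux.

Theorem lemma4p7 (C : numClosedFieldType) (n : nat) (p : {set 'I_n} -> C)
  (p_real : forall S, p S \is Num.real)
  (p_nz : forall S, p S != 0)
  (p_sym : forall S, p S = p (~: S))
  (hA : forall (j : 'I_n) (z : 'I_n -> C),
          (forall i, i != j -> 1 <= `|z i|) -> mpoly_coef_A p j z != 0) :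
  LeeYang (mpoly_eval p).
Proof.
have hA' : forall j z, (forall i, i != j -> 1 <= `|z i|) -> @Aj C n p j z != 0.
  by move=> j z h; rewrite -coefA_eq; apply: hA.
move=> z hz [k hk].
rewrite (@eval_decomp C n p k z).
have Ak0 : @Aj C n p k z != 0 by apply: hA' => i _; apply: hz.
have hle : `|@Bj C n p k z| <= `|@Aj C n p k z|.
  apply: (@main_ind C n p p_real p_sym p_nz hA' n k z).
    by move=> i _; apply: hz.
  by rewrite /cnt (leq_trans (max_card _)) // card_ord.
apply/negP => /eqP h.
move/eqP: h; rewrite addr_eq0 => /eqP h.
have : `|z k| * `|@Aj C n p k z| <= `|@Aj C n p k z| by rewrite -normrM h normrN.
rewrite ger_pMl ?normr_gt0 // => hk1.
by move: (lt_le_trans hk hk1); rewrite ltxx.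
Qed.
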